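(* Let $G=(V,E)$ be a graph with square $G^2=(V,E^2)$, and let $\sigma=(v_1,\ldots,v_n)$ be a maximum neighborhood ordering of $G$ such that for all $1\le i<n$, $m_i$ is a maximum neighbor of $v_i$ in $G_{\sigma,i}$ with $v_i\neq m_i$. If $1\le i<j\le n$ and $m_i\neq v_j$, then $v_iv_j\in E^2$ if and only if $m_iv_j\in E$.
   Context: All graphs are finite, simple and undirected; $N[v]$ denotes the closed neighborhood of $v$. The square $G^2=(V,E^2)$ has distinct $u,v$ adjacent iff $uv\in E$ or $u,v$ have a common neighbor in $G$. For a total ordering $\sigma=(v_1,\ldots,v_n)$ of $V$, $G_{\sigma,i}$ is the subgraph of $G$ induced by $\{v_i,\ldots,v_n\}$. In a graph $H$, a vertex $u\in N_H[v]$ is a maximum neighbor of $v$ if $N_H[x]\subseteq N_H[u]$ for all $x\in N_H[v]$. An ordering $\sigma$ is a maximum neighborhood ordering of $G$ if for every $i$, $v_i$ has a maximum neighbor in $G_{\sigma,i}$. *)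

(* Defs.v *)
From mathcomp Require Import all_boot.
Set Implicit Arguments. Unset Strict Implicit. Unset Printing Implicit Defensive.

Definition simple_graph (T : finType) (e : rel T) : Prop :=
  symmetric e /\ irreflexive e.

(* Closed neighbourhood N_H[v] in the subgraph H of (T,e) induced by S. *)
Definition cnbh (T : finType) (e : rel T) (S : {set T}) (v : T) : {set T} :=
  [set x in S | (x == v) || e v x].

Definition max_nb (T : finType) (e : rel T) (S : {set T}) (v u : T) : Prop :=
  u \in cnbh e S v /\ forall x, x \in cnbh e S v -> cnbh e S x \subset cnbh e S u.

Definition sq_adj (T : finType) (e : rel T) (u v : T) : bool :=
  (u != v) && (e u v || [exists w, e u w && e w v]).

(* Vertex set of G_{sigma,i} = G[{v_i,...,v_n}] (0-based indices). *)
Definition suffix_set (T : finType) (n : nat) (sigma : 'I_n -> T) (i : 'I_n)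
  : {set T} := [set sigma j | j : 'I_n & i <= j].

Definition is_ordering (T : finType) (n : nat) (sigma : 'I_n -> T) : Prop :=
  bijective sigma.

Definition is_MNO (T : finType) (e : rel T) (n : nat) (sigma : 'I_n -> T) : Prop :=
  is_ordering sigma /\
  forall i : 'I_n, exists u, max_nb e (suffix_set sigma i) (sigma i) u.

(* Main.v *)
Require Import Defs.
From mathcomp Require Import all_boot.

Theorem lemma7 (T : finType) (e : rel T) (n : nat)
  (sigma : 'I_n -> T) (m : 'I_n -> T) :
  simple_graph e ->
  is_MNO e sigma ->
  (forall i : 'I_n, i.+1 < n ->
     max_nb e (suffix_set sigma i) (sigma i) (m i) /\ sigma i != m i) ->
  forall i j : 'I_n, i < j -> m i != sigma j ->
    (sq_adj e (sigma i) (sigma j) <-> e (m i) (sigma j)).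
Proof.
move=> [esym eirr] [bij _] Hm i j lt_ij ne_mj.
have inj := bij_inj bij.
have memS : forall a b : 'I_n, (sigma b \in suffix_set sigma a) = (a <= b).
  move=> a b; apply/imsetP/idP => [[c]|hab]; last by exists b; rewrite ?inE.
  by rewrite inE => hac /inj ->.
have Hi1 : i.+1 < n by apply: leq_ltn_trans lt_ij (ltn_ord j).
have [[mi_in mi_max] ne_im] := Hm i Hi1.
have ne_ij : sigma i != sigma j.
  by apply/eqP => /inj hij; move: lt_ij; rewrite hij ltnn.
have inS : forall k : 'I_n, i <= k -> e (sigma i) (sigma k) ->
    e (sigma k) (sigma j) -> e (m i) (sigma j).
  move=> k hik h1 h2.
  have hk : sigma k \in cnbh e (suffix_set sigma i) (sigma i).
    by rewrite inE memS hik h1 orbT.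
  have := subsetP (mi_max _ hk) (sigma j).
  rewrite !inE memS (ltnW lt_ij) /= h2 orbT => /(_ isT) /orP [/eqP hj|//].
  by move: ne_mj; rewrite hj eqxx.
have direct : e (sigma i) (sigma j) -> e (m i) (sigma j).
  move=> h.
  have hk : sigma j \in cnbh e (suffix_set sigma i) (sigma i).
    by rewrite inE memS (ltnW lt_ij) h orbT.
  have := subsetP (mi_max _ hk) (sigma j).
  rewrite !inE memS (ltnW lt_ij) eqxx /= => /(_ isT) /orP [/eqP hj|//].
  by move: ne_mj; rewrite hj eqxx.
have key : forall d (k : 'I_n), i - k <= d -> e (sigma i) (sigma k) ->
    e (sigma k) (sigma j) -> e (m i) (sigma j).
  elim=> [|d IH] k hd h1 h2.
    by apply: (inS k) => //; rewrite -subn_eq0 -leqn0.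
  case: (leqP i k) => hik; first exact: (inS k).
  have Hk1 : k.+1 < n by apply: leq_ltn_trans hik (ltn_ord i).
  have [[mk_in mk_max] ne_km] := Hm k Hk1.
  have hi : sigma i \in cnbh e (suffix_set sigma k) (sigma k).
    by rewrite inE memS (ltnW hik) esym h1 orbT.
  have hj : sigma j \in cnbh e (suffix_set sigma k) (sigma k).
    by rewrite inE memS (ltnW (ltn_trans hik lt_ij)) h2 orbT.
  have := subsetP (mk_max _ hi) (sigma i).
  rewrite !inE memS (ltnW hik) eqxx /= => /(_ isT) /orP hmi.
  have := subsetP (mk_max _ hj) (sigma j).
  rewrite !inE memS (ltnW (ltn_trans hik lt_ij)) eqxx /= => /(_ isT) /orP hmj.
  move: mk_in; rewrite inE => /andP [/imsetP [k' hk' ekk'] _].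
  rewrite inE in hk'.
  case: hmi => [/eqP ei|emi].
    case: hmj => [/eqP ej|emj].
      by move: ne_ij; rewrite ei ej eqxx.
    by apply: direct; rewrite ei.
  case: hmj => [/eqP ej|emj].
    by apply: direct; rewrite esym ej.
  have kk' : k < k'.
    rewrite ltn_neqAle hk' andbT; apply/eqP => hkk.
    by move: ne_km; rewrite ekk' (ord_inj hkk) eqxx.
  apply: (IH k'); last by rewrite -ekk'.
    by apply: leq_trans (_ : i - k.+1 <= d); [apply: leq_sub2l | rewrite subnS -subn1 leq_subLR add1n].
  by rewrite -ekk' esym.
split.
  move=> /andP [_ /orP [h|/existsP [w /andP [h1 h2]]]]; first exact: direct.
  have [g sg gs] := bij.
  apply: (key (i - g w) (g w)) => //; by rewrite gs.
move=> h; rewrite /sq_adj ne_ij /=; apply/orP; right; apply/existsP; exists (m i).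
rewrite h andbT.
by move: mi_in; rewrite inE => /andP [_ /orP [/eqP hh|//]]; move: ne_im; rewrite hh eqxx.
Qed.
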